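(* Let $(X,\le)$ be a globally hyperbolic poset. A formal interval is a map $x:\{1,2\}\to X$ with $x(1)\le x(2)$. The set of formal intervals, ordered by $x\sqsubseteq y$ iff $x(1)\le y(1)$ and $y(2)\le x(2)$, is a domain (continuous dcpo) order-isomorphic to $\mathbf{I}X$, the set $\{[a,b]: a\le b\}$ of closed intervals $[a,b]=\{z: a\le z\le b\}$ of $X$ ordered by reverse inclusion.
   Context: For a poset $(P,\sqsubseteq)$: a nonempty $S\subseteq P$ is directed if any two elements have an upper bound in $S$, filtered if any two have a lower bound in $S$; $\bigsqcup S$, $\bigwedge S$ denote supremum/infimum. $x\ll y$ iff for every directed $S$ with a supremum, $y\sqsubseteq\bigsqcup S$ implies $x\sqsubseteq s$ for some $s\in S$. $\Downarrow x=\{a:a\ll x\}$, $\Uparrow x=\{a:x\ll a\}$. $P$ is continuous if it has a subset $B$ such that for every $x$, $B\cap\Downarrow x$ contains a directed set with supremum $x$. A domain is a continuous poset in which every directed set has a supremum. A continuous poset is bicontinuous if (1) $x\ll y$ iff for every filtered $S$ having an infimum, $\bigwedge S\sqsubseteq x$ implies $s\sqsubseteq y$ for some $s\in S$; and (2) each $\Uparrow x$ is filtered with infimum $x$. The interval topology of a bicontinuous poset has basis the sets $\{z: a\ll z\ll b\}$. A globally hyperbolic poset is a bicontinuous poset in which every closed interval $[a,b]$ is compact in the interval topology. *)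

(* Defs.v *)
From Stdlib Require Import List.
Import ListNotations.

Section OrderDefs.
Variable T : Type.
Variable le : T -> T -> Prop.

Definition is_poset : Prop :=
  (forall x, le x x) /\
  (forall x y, le x y -> le y x -> x = y) /\
  (forall x y z, le x y -> le y z -> le x z).

Definition directed (S : T -> Prop) : Prop :=
  (exists x, S x) /\
  (forall x y, S x -> S y -> exists z, S z /\ le x z /\ le y z).

Definition filtered (S : T -> Prop) : Prop :=
  (exists x, S x) /\
  (forall x y, S x -> S y -> exists z, S z /\ le z x /\ le z y).

Definition is_sup (S : T -> Prop) (s : T) : Prop :=
  (forall x, S x -> le x s) /\ (forall u, (forall x, S x -> le x u) -> le s u).

Definition is_inf (S : T -> Prop) (s : T) : Prop :=
  (forall x, S x -> le s x) /\ (forall u, (forall x, S x -> le u x) -> le u s).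

Definition waybelow (x y : T) : Prop :=
  forall (S : T -> Prop) (s : T), directed S -> is_sup S s -> le y s ->
    exists z, S z /\ le x z.

Definition ddown (x : T) : T -> Prop := fun a => waybelow a x.
Definition uup (x : T) : T -> Prop := fun a => waybelow x a.

Definition continuous_poset : Prop :=
  is_poset /\
  exists B : T -> Prop, forall x, exists S : T -> Prop,
    (forall z, S z -> B z /\ waybelow z x) /\ directed S /\ is_sup S x.

Definition dcpo_prop : Prop :=
  forall S : T -> Prop, directed S -> exists s, is_sup S s.

Definition is_domain : Prop := continuous_poset /\ dcpo_prop.

Definition bicontinuous : Prop :=
  continuous_poset /\
  (forall x y, waybelow x y <->
     (forall (S : T -> Prop) (s : T), filtered S -> is_inf S s -> le s x ->
        exists z, S z /\ le z y)) /\
  (forall x, filtered (uup x) /\ is_inf (uup x) x).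

Definition interval_open (U : T -> Prop) : Prop :=
  forall z, U z -> exists a b, waybelow a z /\ waybelow z b /\
    (forall w, waybelow a w -> waybelow w b -> U w).

Definition cinterval (a b : T) : T -> Prop := fun z => le a z /\ le z b.

Definition interval_compact (K : T -> Prop) : Prop :=
  forall C : (T -> Prop) -> Prop,
    (forall U, C U -> interval_open U) ->
    (forall z, K z -> exists U, C U /\ U z) ->
    exists l : list (T -> Prop),
      (forall U, In U l -> C U) /\ (forall z, K z -> exists U, In U l /\ U z).

Definition globally_hyperbolic : Prop :=
  bicontinuous /\ forall a b, interval_compact (cinterval a b).

(* formal intervals: maps x : {1,2} -> T (encoded as pairs) with x(1) <= x(2) *)
Definition formal_interval : Type := { p : T * T | le (fst p) (snd p) }.

Definition fi_le (x y : formal_interval) : Prop :=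
  le (fst (proj1_sig x)) (fst (proj1_sig y)) /\
  le (snd (proj1_sig y)) (snd (proj1_sig x)).

Definition IX : Type :=
  { A : T -> Prop | exists a b, le a b /\ A = cinterval a b }.

Definition IX_le (A B : IX) : Prop :=
  forall z, proj1_sig B z -> proj1_sig A z.

End OrderDefs.

Arguments formal_interval {T} le.
Arguments IX {T} le.

Definition order_isomorphic {A B : Type} (leA : A -> A -> Prop)
  (leB : B -> B -> Prop) : Prop :=
  exists (f : A -> B) (g : B -> A),
    (forall x, g (f x) = x) /\ (forall y, f (g y) = y) /\
    (forall x y, leA x y <-> leB (f x) (f y)).

(* Main.v *)
Require Import Defs.
From Stdlib Require Import List Classical ProofIrrelevance ClassicalEpsilon.
Import ListNotations.

Definition lft {X : Type} {le : X -> X -> Prop} (x : formal_interval le) : X :=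
  fst (proj1_sig x).
Definition rgt {X : Type} {le : X -> X -> Prop} (x : formal_interval le) : X :=
  snd (proj1_sig x).

Lemma lr {X : Type} {le : X -> X -> Prop} (x : formal_interval le) :
  le (lft x) (rgt x).
Proof. exact (proj2_sig x). Qed.

Lemma wb_le {X : Type} (le : X -> X -> Prop) (hX : is_poset X le) x y :
  waybelow X le x y -> le x y.
Proof.
  intro H. destruct hX as [hr [ha ht]].
  destruct (H (fun z => z = y) y) as [z [-> Hz]]; auto.
  - split; [exists y; auto|]. intros a b -> ->. exists y; auto.
  - split; [intros a ->; auto| intros u Hu; apply Hu; auto].
Qed.

Lemma interval_compl_open {X : Type} (le : X -> X -> Prop)
  (hX : is_poset X le) (hb : bicontinuous X le) p1 p2 :
  interval_open X le (fun z => ~ (le p1 z /\ le z p2)).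
Proof.
  destruct hX as [hr [ha ht]].
  destruct hb as [[_ [B hB]] [h1 h2]].
  intros z Hz.
  apply not_and_or in Hz. destruct Hz as [Hz|Hz].
  - assert (exists b, waybelow X le z b /\ ~ le p1 b) as [b [Hb1 Hb2]].
    { apply NNPP; intro C. apply Hz. destruct (h2 z) as [_ [_ Hinf]].
      apply Hinf. intros x Hx. apply NNPP; intro C2. apply C; exists x; auto. }
    destruct (hB z) as [S [HS1 [[[a Ha] _] _]]].
    exists a, b. split; [apply HS1; auto|]. split; auto.
    intros w _ Hw [Hw1 _]. apply Hb2. apply ht with w; auto.
    apply (wb_le le (conj hr (conj ha ht))); auto.
  - destruct (hB z) as [S [HS1 [HSd HSs]]].
    assert (exists a, S a /\ ~ le a p2) as [a [Ha1 Ha2]].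
    { apply NNPP; intro C. apply Hz. destruct HSs as [_ Hl]. apply Hl.
      intros x Hx. apply NNPP; intro C2. apply C; exists x; auto. }
    destruct (h2 z) as [[[b Hb] _] _].
    exists a, b. split; [apply HS1; auto|]. split; auto.
    intros w Hw _ [_ Hw2]. apply Ha2. apply ht with w; auto.
    apply (wb_le le (conj hr (conj ha ht))); auto.
Qed.

Lemma list_pick {X I : Type} (P : I -> Prop) (Q : I -> X -> Prop) (C : X -> Prop) :
  forall l : list X, (forall U, In U l -> exists i, P i /\ Q i U) ->
  exists li : list I, (forall i, In i li -> P i) /\
    (forall U, In U l -> exists i, In i li /\ Q i U).
Proof.
  induction l as [|U l IH]; intros H.
  - exists []. simpl. split; tauto.
  - destruct IH as [li [H1 H2]]. { intros V HV. apply H. simpl; auto. }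
    destruct (H U) as [i [Hi1 Hi2]]. simpl; auto.
    exists (i :: li). split.
    + intros j [<-|Hj]; auto.
    + intros V [<-|HV]. exists i; simpl; auto.
      destruct (H2 V HV) as [j [Hj1 Hj2]]. exists j; simpl; auto.
Qed.

Lemma fip {X : Type} (le : X -> X -> Prop)
  (hX : is_poset X le) (hgh : globally_hyperbolic X le) (a b : X)
  (I : Type) (P : I -> Prop) (f g : I -> X) :
  (forall l : list I, (forall i, In i l -> P i) ->
     exists z, cinterval X le a b z /\ forall i, In i l -> le (f i) z /\ le z (g i)) ->
  exists z, cinterval X le a b z /\ forall i, P i -> le (f i) z /\ le z (g i).
Proof.
  intro H. apply NNPP; intro C.
  destruct hgh as [hb hc].
  pose (Q := fun i (U : X -> Prop) => U = (fun z => ~ (le (f i) z /\ le z (g i)))).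
  destruct (hc a b (fun U => exists i, P i /\ Q i U)) as [l [Hl1 Hl2]].
  - intros U [i [_ ->]]. apply interval_compl_open; auto.
  - intros z Hz. assert (exists i, P i /\ ~ (le (f i) z /\ le z (g i))) as [i [Hi1 Hi2]].
    { apply NNPP; intro C2. apply C. exists z. split; auto. intros i Hi.
      apply NNPP; intro C3. apply C2; exists i; auto. }
    exists (fun z => ~ (le (f i) z /\ le z (g i))). split; auto. exists i; split; auto.
    reflexivity.
  - destruct (list_pick P Q (fun _ => True) l Hl1) as [li [Hli1 Hli2]].
    destruct (H li Hli1) as [z [Hz1 Hz2]].
    destruct (Hl2 z Hz1) as [U [HU1 HU2]].
    destruct (Hli2 U HU1) as [i [Hi1 Hi2]]. unfold Q in Hi2. subst U.
    apply HU2. apply Hz2; auto.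
Qed.

Definition lefts {X : Type} {le : X -> X -> Prop} (D : formal_interval le -> Prop) : X -> Prop :=
  fun a => exists x, D x /\ a = lft x.
Definition rights {X : Type} {le : X -> X -> Prop} (D : formal_interval le -> Prop) : X -> Prop :=
  fun a => exists x, D x /\ a = rgt x.

Lemma fi_dir_list {X : Type} (le : X -> X -> Prop) (hX : is_poset X le)
  (D : formal_interval le -> Prop) (hD : directed _ (fi_le X le) D) e0 :
  D e0 -> forall xs, (forall y, In y xs -> D y) ->
  exists x, D x /\ fi_le X le e0 x /\ forall y, In y xs -> fi_le X le y x.
Proof.
  destruct hX as [hr [ha ht]]. intros He0.
  induction xs as [|y xs IH]; intros H.
  - exists e0. split; auto. split; [split; auto|]. simpl; tauto.
  - destruct IH as [x [Hx1 [Hx2 Hx3]]]. intros; apply H; simpl; auto.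
    destruct hD as [_ hD]. destruct (hD x y Hx1) as [z [Hz1 [Hz2 Hz3]]]. apply H; simpl; auto.
    exists z. split; auto. destruct Hx2, Hz2. split; [split; eauto|].
    intros w [<-|Hw]; auto. destruct (Hx3 w Hw). split; eauto.
Qed.

Lemma fi_cross {X : Type} (le : X -> X -> Prop) (hX : is_poset X le)
  (D : formal_interval le -> Prop) (hD : directed _ (fi_le X le) D) x y :
  D x -> D y -> le (lft x) (rgt y).
Proof.
  destruct hX as [hr [ha ht]]. intros Hx Hy.
  destruct hD as [_ hD]. destruct (hD x y Hx Hy) as [z [_ [[H1 _] [_ H2]]]].
  apply ht with (lft z); auto. apply ht with (rgt z); auto. apply lr.
Qed.

Lemma fi_dcpo {X : Type} (le : X -> X -> Prop)
  (hX : is_poset X le) (hgh : globally_hyperbolic X le)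
  (D : formal_interval le -> Prop) (hD : directed _ (fi_le X le) D) :
  exists s : formal_interval le, is_sup _ (fi_le X le) D s /\
    is_sup X le (lefts D) (lft s) /\ is_inf X le (rights D) (rgt s).
Proof.
  pose proof hX as hX'. destruct hX' as [hr [ha ht]].
  destruct hD as [[e0 He0] hD'] eqn:EhD.
  destruct (fip le hX hgh (lft e0) (rgt e0) (formal_interval le * X)
     (fun p => D (fst p) /\ forall y, D y -> le (lft y) (snd p))
     (fun p => lft (fst p)) snd) as [s [Hs1 Hs2]].
  { intros l Hl.
    destruct (fi_dir_list le hX D hD e0 He0 (map fst l)) as [x [Hx1 [Hx2 Hx3]]].
    { intros y Hy. apply in_map_iff in Hy. destruct Hy as [p [<- Hp]]. apply Hl; auto. }
    exists (lft x). split.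
    - destruct Hx2. split; auto. apply ht with (rgt x); auto. apply lr.
    - intros p Hp. split.
      + apply (Hx3 (fst p)). apply in_map; auto.
      + apply (Hl p Hp); auto. }
  destruct (fip le hX hgh (lft e0) (rgt e0) (formal_interval le * X)
     (fun p => D (fst p) /\ forall y, D y -> le (snd p) (rgt y))
     snd (fun p => rgt (fst p))) as [t [Ht1 Ht2]].
  { intros l Hl.
    destruct (fi_dir_list le hX D hD e0 He0 (map fst l)) as [x [Hx1 [Hx2 Hx3]]].
    { intros y Hy. apply in_map_iff in Hy. destruct Hy as [p [<- Hp]]. apply Hl; auto. }
    exists (rgt x). split.
    - destruct Hx2. split; auto. apply ht with (lft x); auto. apply lr.
    - intros p Hp. split.
      + apply (Hl p Hp); auto.
      + apply (Hx3 (fst p)). apply in_map; auto. }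
  assert (Hsup : is_sup X le (lefts D) s).
  { split.
    - intros a [x [Hx ->]]. apply (Hs2 (x, rgt x)). split; auto.
      intros y Hy. apply (fi_cross le hX D hD); auto.
    - intros u Hu. apply (Hs2 (e0, u)). split; auto.
      intros y Hy. apply Hu. exists y; auto. }
  assert (Hinf : is_inf X le (rights D) t).
  { split.
    - intros a [x [Hx ->]]. apply (Ht2 (x, lft x)). split; auto.
      intros y Hy. apply (fi_cross le hX D hD); auto.
    - intros u Hu. apply (Ht2 (e0, u)). split; auto.
      intros y Hy. apply Hu. exists y; auto. }
  assert (Hst : le s t).
  { apply Hinf. intros a [x [Hx ->]]. apply Hsup.
    intros b [y [Hy ->]]. apply (fi_cross le hX D hD); auto. }
  exists (exist _ (s, t) Hst). unfold lft, rgt; simpl. split; [|split; auto].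
  split.
  - intros x Hx. split; simpl.
    + apply Hsup. exists x; auto.
    + apply Hinf. exists x; auto.
  - intros u Hu. split; simpl.
    + apply Hsup. intros a [x [Hx ->]]. apply (Hu x Hx).
    + apply Hinf. intros a [x [Hx ->]]. apply (Hu x Hx).
Qed.

Lemma fi_eq {X : Type} {le : X -> X -> Prop} (x y : formal_interval le) :
  lft x = lft y -> rgt x = rgt y -> x = y.
Proof.
  destruct x as [[a b] h], y as [[c d] k]. unfold lft, rgt; simpl.
  intros -> ->. f_equal. apply proof_irrelevance.
Qed.

Lemma g_ex {X : Type} (le : X -> X -> Prop) (A : IX le) :
  {x : formal_interval le | proj1_sig A = cinterval X le (lft x) (rgt x)}.
Proof.
  destruct A as [A HA]. apply constructive_indefinite_description.
  destruct HA as [a [b [Hab ->]]]. exists (exist _ (a,b) Hab). reflexivity.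
Qed.

Theorem mainTheorem4 (X : Type) (le : X -> X -> Prop)
  (hX : is_poset X le) (hgh : globally_hyperbolic X le) :
  is_domain (formal_interval le) (fi_le X le) /\
  order_isomorphic (fi_le X le) (IX_le X le).
Proof.
  pose proof hX as hX'. destruct hX' as [hr [ha ht]].
  pose proof hgh as [hb _]. pose proof hb as [[_ [B hB]] [h1 h2]].
  assert (Hpos : is_poset (formal_interval le) (fi_le X le)).
  { split; [|split].
    - intro x; split; auto.
    - intros x y [H1 H2] [H3 H4]. apply fi_eq; auto.
    - intros x y z [H1 H2] [H3 H4]. split; eauto. }
  split; [split; [split; [exact Hpos|] | ] |].
  - exists (fun _ => True). intros x.
    destruct (hB (lft x)) as [SL [HSL1 [HSLd HSLs]]].
    pose proof (h2 (rgt x)) as [HSRf HSRi].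
    assert (Hmk : forall a b, SL a -> uup X le (rgt x) b -> le a b).
    { intros a b Ha Hb. apply ht with (lft x). apply (wb_le le hX). apply HSL1; auto.
      apply ht with (rgt x). apply lr. apply (wb_le le hX). exact Hb. }
    exists (fun y => SL (lft y) /\ uup X le (rgt x) (rgt y)).
    split; [|split].
    + intros y [Hy1 Hy2]. split; auto.
      intros S s HS Hs Hxs.
      destruct (fi_dcpo le hX hgh S HS) as [s' [Hs' [Hl Hr]]].
      assert (Hss' : fi_le X le s s') by (apply Hs; apply Hs').
      destruct Hxs as [Hxs1 Hxs2]. destruct Hss' as [Hss1 Hss2].
      destruct (HSL1 _ Hy1) as [_ Hwb].
      destruct (Hwb (lefts S) (lft s')) as [a [[e [He ->]] Hae]].
      { destruct HS as [[e He] HS']. split; [exists (lft e), e; auto|].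
        intros a b [x1 [Hx1 ->]] [x2 [Hx2 ->]].
        destruct (HS' x1 x2 Hx1 Hx2) as [z [Hz [[? _] [? _]]]].
        exists (lft z). split; [exists z; auto| auto]. }
      { exact Hl. }
      { eauto. }
      destruct ((proj1 (h1 (rgt x) (rgt y)) Hy2) (rights S) (rgt s')) as [b [[e' [He' ->]] Hbe]].
      { destruct HS as [[e0 He0] HS']. split; [exists (rgt e0), e0; auto|].
        intros a b [x1 [Hx1 ->]] [x2 [Hx2 ->]].
        destruct (HS' x1 x2 Hx1 Hx2) as [z [Hz [[_ ?] [_ ?]]]].
        exists (rgt z). split; [exists z; auto| auto]. }
      { exact Hr. }
      { eauto. }
      destruct HS as [_ HS']. destruct (HS' e e' He He') as [z [Hz [[? _] [_ ?]]]].
      exists z. split; auto. split; eauto.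
    + destruct HSLd as [[a Ha] HSLd']. destruct HSRf as [[b Hb] HSRf'].
      split.
      * exists (exist _ (a,b) (Hmk a b Ha Hb)). unfold lft, rgt; simpl; auto.
      * intros y y' [Hy1 Hy2] [Hy1' Hy2'].
        destruct (HSLd' _ _ Hy1 Hy1') as [a' [Ha'1 [Ha'2 Ha'3]]].
        destruct (HSRf' _ _ Hy2 Hy2') as [b' [Hb'1 [Hb'2 Hb'3]]].
        exists (exist _ (a',b') (Hmk a' b' Ha'1 Hb'1)). unfold fi_le, lft, rgt in *; simpl.
        auto 6.
    + split.
      * intros y [Hy1 Hy2]. split.
        -- apply (wb_le le hX). apply HSL1; auto.
        -- apply (wb_le le hX). exact Hy2.
      * intros u Hu. destruct HSLd as [[a0 Ha0] _]. destruct HSRf as [[b0 Hb0] _].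
        split.
        -- apply HSLs. intros a Ha.
           apply (Hu (exist _ (a,b0) (Hmk a b0 Ha Hb0))). unfold lft, rgt; simpl; auto.
        -- apply HSRi. intros b Hb.
           apply (Hu (exist _ (a0,b) (Hmk a0 b Ha0 Hb))). unfold lft, rgt; simpl; auto.
  - intros S HS. destruct (fi_dcpo le hX hgh S HS) as [s [Hs _]]. eauto.
  - assert (Hf : forall x : formal_interval le, exists a b, le a b /\
        cinterval X le (lft x) (rgt x) = cinterval X le a b).
    { intros x. exists (lft x), (rgt x). split; auto. apply lr. }
    exists (fun x => exist _ (cinterval X le (lft x) (rgt x)) (Hf x)).
    exists (fun A => proj1_sig (g_ex le A)).
    split; [|split].
    + intros x. destruct (g_ex le _) as [y Hy]. simpl in *.
      assert (E : forall z, cinterval X le (lft x) (rgt x) z <-> cinterval X le (lft y) (rgt y) z)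
        by (intro z; rewrite Hy; tauto).
      pose proof (lr x). pose proof (lr y).
      destruct (proj1 (E (lft x))) as [? ?]; [split; auto|].
      destruct (proj1 (E (rgt x))) as [? ?]; [split; auto|].
      destruct (proj2 (E (lft y))) as [? ?]; [split; auto|].
      destruct (proj2 (E (rgt y))) as [? ?]; [split; auto|].
      apply fi_eq; auto.
    + intros A. destruct (g_ex le A) as [y Hy]. simpl.
      destruct A as [A HA]. simpl in *. subst A. f_equal. apply proof_irrelevance.
    + intros x y. unfold IX_le, fi_le; simpl. fold (@lft X le x) (@rgt X le x) (@lft X le y) (@rgt X le y).
      split.
      * intros [H1 H2] z [Hz1 Hz2]. split; eauto.
      * intros H. pose proof (lr y).
        destruct (H (lft y)) as [? _]; [split; auto|].
        destruct (H (rgt y)) as [_ ?]; [split; auto|]. split; auto.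
Qed.
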